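(* Let $\gamma,\varepsilon^*,C^*,\lambda_1,\lambda_2>0$, set $\check C_0=C^*+\varepsilon^*/2$ and $\tilde C_0=C^*+1$, and assume $\lambda_1h\le\Delta t\le\lambda_2h$. Let $\check\rho^n,\check\rho^{n+1},\rho^n,\rho^{n+1},\hat\rho^{n+\frac12}\in\mathcal C$ satisfy, pointwise and on all faces: (a) $\varepsilon^*\le\check\rho^k\le C^*$ and $\|\nabla_h\check\rho^k\|_\infty\le C^*$ for $k=n,n+1$; $\|\check\rho^{n+1}-\check\rho^n\|_\infty\le C^*\Delta t$, $\|\nabla_h(\check\rho^{n+1}-\check\rho^n)\|_\infty\le C^*\Delta t$; (b) $\varepsilon^*/2\le\rho^{n+1}\le\check C_0$, $\rho^n>0$, $\|\nabla_h\rho^k\|_\infty\le\tilde C_0$ for $k=n,n+1$, and $\|\rho^{n+1}-\rho^n\|_\infty\le\tilde C_0\Delta t$; (c) $\varepsilon^*/2\le\hat\rho^{n+\frac12}\le\check C_0$ and $\frac34\le\hat\rho^{n+\frac12}/\rho^{n+1}\le\frac54$. Let $\tilde\rho^k=\check\rho^k-\rho^k$ and $\tilde S^{n+\frac12}=\check S^{n+\frac12}-S^{n+\frac12}$ with $$\check S^{n+\frac12}=\ln\check\rho^{n+1}-\frac{\check\rho^{n+1}-\check\rho^n}{2\check\rho^{n+1}}-\frac{(\check\rho^{n+1}-\check\rho^n)^2}{6(\check\rho^{n+1})^2},\quad S^{n+\frac12}=\ln\rho^{n+1}-\frac{\rho^{n+1}-\rho^n}{2\rho^{n+1}}-\frac{(\rho^{n+1}-\rho^n)^2}{6(\rho^{n+1})^2}.$$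 Then there exist positive constants $\tilde C_1,M_1$ depending only on $\varepsilon^*,C^*,\gamma,\lambda_1,\lambda_2$ (and $|\Omega|$) such that, for $h$ sufficiently small, $$\gamma\big[\hat\rho^{n+\frac12}\nabla_h\tilde S^{n+\frac12},\nabla_h(\tilde\rho^{n+1}+\tilde\rho^n)\big]\ge\frac\gamma4\|\nabla_h(\tilde\rho^{n+1}+\tilde\rho^n)\|_2^2-\tilde C_1\big(\|\tilde\rho^{n+1}\|_2^2+\|\tilde\rho^n\|_2^2\big)-M_1h^8.$$
   Context: Grid setting: $\Omega=(a,b)^3$, $N\in\mathbb N$, $h=(b-a)/N$, cell centers $(a+(i-\tfrac12)h,a+(j-\tfrac12)h,a+(k-\tfrac12)h)$, $1\le i,j,k\le N$. $\mathcal C$ is the space of cell-centered grid functions extended to ghost points by the discrete homogeneous Neumann condition $u_{0,j,k}=u_{1,j,k}$, $u_{N+1,j,k}=u_{N,j,k}$ (likewise in $j,k$). $D_xf_{i+1/2,j,k}=(f_{i+1,j,k}-f_{i,j,k})/h$, $A_xf_{i+1/2,j,k}=(f_{i+1,j,k}+f_{i,j,k})/2$; for face-centered $g$, $a_xg_{i,j,k}=(g_{i+1/2,j,k}+g_{i-1/2,j,k})/2$; analogously in $y,z$; $\nabla_hf=(D_xf,D_yf,D_zf)$. $\langle f,g\rangle=h^3\sum_{i,j,k=1}^Nf_{i,j,k}g_{i,j,k}$, $\|f\|_2^2=\langle f,f\rangle$, $\|f\|_\infty=\max|f_{i,j,k}|$, $\|\nabla_hf\|_\infty$ is the maximum of $|D_xf|,|D_yf|,|D_zf|$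 over all faces. For face-centered vector fields $[\vec f,\vec g]=\langle a_x(f^xg^x)+a_y(f^yg^y)+a_z(f^zg^z),1\rangle$, $\|\nabla_hf\|_2^2=[\nabla_hf,\nabla_hf]$, and for cell-centered $\mathcal D$, $[\mathcal D\nabla_hf,\nabla_hg]:=[(A_x\mathcal D\,D_xf,A_y\mathcal D\,D_yf,A_z\mathcal D\,D_zf),\nabla_hg]$. Nonlinear functions are applied pointwise. *)

(* Defs.v *)
From Stdlib Require Import Reals Lra.
Open Scope R_scope.

(* Cell-centered grid function; cell (i,j,k) with 1 <= i,j,k <= N.
   Values outside 1..N are irrelevant: they are replaced by the
   discrete homogeneous Neumann extension [ext]. *)
Definition grid := nat -> nat -> nat -> R.

Definition hN (a b : R) (N : nat) : R := (b - a) / INR N.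

(* ghost-point extension: index 0 -> 1, N+1 -> N *)
Definition clamp (N i : nat) : nat := Nat.min (Nat.max i 1) N.
Definition ext (N : nat) (u : grid) : grid :=
  fun i j k => u (clamp N i) (clamp N j) (clamp N k).

Definition gadd (f g : grid) : grid := fun i j k => f i j k + g i j k.
Definition gsub (f g : grid) : grid := fun i j k => f i j k - g i j k.
Definition gmul (f g : grid) : grid := fun i j k => f i j k * g i j k.

Fixpoint sum1 (n : nat) (f : nat -> R) : R :=
  match n with O => 0 | S m => sum1 m f + f n end.

Definition in_cells (N i j k : nat) : Prop :=
  (1 <= i <= N)%nat /\ (1 <= j <= N)%nat /\ (1 <= k <= N)%nat.

(* Face-centered functions: an x-face function g stores at index (i,j,k)
   its value on the face (i+1/2, j, k), 0 <= i <= N; analogously y, z. *)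
Definition Dx N h (f : grid) : grid := fun i j k => (ext N f (S i) j k - ext N f i j k) / h.
Definition Dy N h (f : grid) : grid := fun i j k => (ext N f i (S j) k - ext N f i j k) / h.
Definition Dz N h (f : grid) : grid := fun i j k => (ext N f i j (S k) - ext N f i j k) / h.
Definition Ax N (f : grid) : grid := fun i j k => (ext N f (S i) j k + ext N f i j k) / 2.
Definition Ay N (f : grid) : grid := fun i j k => (ext N f i (S j) k + ext N f i j k) / 2.
Definition Az N (f : grid) : grid := fun i j k => (ext N f i j (S k) + ext N f i j k) / 2.
(* face -> cell averages, for cells 1 <= i <= N: faces i-1/2 (index i-1) and i+1/2 (index i) *)
Definition ax (g : grid) : grid := fun i j k => (g i j k + g (pred i) j k) / 2.
Definition ay (g : grid) : grid := fun i j k => (g i j k + g i (pred j) k) / 2.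
Definition az (g : grid) : grid := fun i j k => (g i j k + g i j (pred k)) / 2.

Definition inner N h (f g : grid) : R :=
  h ^ 3 * sum1 N (fun i => sum1 N (fun j => sum1 N (fun k => f i j k * g i j k))).
Definition norm2sq N h (f : grid) : R := inner N h f f.

Definition bracket N h (fx fy fz gx gy gz : grid) : R :=
  inner N h (fun i j k => ax (gmul fx gx) i j k + ay (gmul fy gy) i j k + az (gmul fz gz) i j k)
            (fun _ _ _ => 1).
Definition gradnorm2sq N h (f : grid) : R :=
  bracket N h (Dx N h f) (Dy N h f) (Dz N h f) (Dx N h f) (Dy N h f) (Dz N h f).
Definition bracketD N h (Dm f g : grid) : R :=
  bracket N h (gmul (Ax N Dm) (Dx N h f)) (gmul (Ay N Dm) (Dy N h f)) (gmul (Az N Dm) (Dz N h f))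
              (Dx N h g) (Dy N h g) (Dz N h g).

Definition maxnorm_le N (f : grid) (C : R) : Prop :=
  forall i j k, in_cells N i j k -> Rabs (f i j k) <= C.
(* ||grad_h f||_oo <= C : over all x-, y-, z-faces (including boundary faces) *)
Definition gradinf_le N h (f : grid) (C : R) : Prop :=
  (forall i j k, (i <= N)%nat -> (1 <= j <= N)%nat -> (1 <= k <= N)%nat ->
      Rabs (Dx N h f i j k) <= C) /\
  (forall i j k, (1 <= i <= N)%nat -> (j <= N)%nat -> (1 <= k <= N)%nat ->
      Rabs (Dy N h f i j k) <= C) /\
  (forall i j k, (1 <= i <= N)%nat -> (1 <= j <= N)%nat -> (k <= N)%nat ->
      Rabs (Dz N h f i j k) <= C).

Definition Sfun (r1 r0 : grid) : grid := fun i j k =>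
  ln (r1 i j k) - (r1 i j k - r0 i j k) / (2 * r1 i j k)
  - (r1 i j k - r0 i j k) ^ 2 / (6 * (r1 i j k) ^ 2).

(* Main.v *)
Require Import Defs.
From Stdlib Require Import Reals Lra Lia.
Open Scope R_scope.

Lemma abs_elim x c : Rabs x <= c -> -c <= x <= c.
Proof. unfold Rabs; destruct (Rcase_abs x); lra. Qed.

Lemma absmul x y A B : Rabs x <= A -> Rabs y <= B -> Rabs (x*y) <= A*B.
Proof.
  intros H1 H2. rewrite Rabs_mult. apply Rmult_le_compat; auto using Rabs_pos.
Qed.

Lemma inv_bound z m0 : 0 < m0 -> m0 <= z -> 0 < / z /\ / z <= / m0.
Proof. intros. split. apply Rinv_0_lt_compat; lra. apply Rinv_le_contravar; lra. Qed.

Lemma absinv z m0 : 0 < m0 -> m0 <= z -> Rabs (/ z) <= / m0.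
Proof. intros. rewrite Rabs_pos_eq. apply Rinv_le_contravar; lra.
  left; apply Rinv_0_lt_compat; lra. Qed.

Lemma ln_le_xm1 z : 0 < z -> ln z <= z - 1.
Proof.
  intros Hz. assert (H := exp_ineq1_le (z - 1)).
  destruct (Req_dec z (exp (z-1))) as [E|E].
  - rewrite E at 1. rewrite ln_exp. lra.
  - left. rewrite <- (ln_exp (z-1)). apply ln_increasing; lra.
Qed.

Lemma ln_ge_1mx z : 0 < z -> 1 - / z <= ln z.
Proof.
  intros Hz. assert (H := ln_le_xm1 (/ z) (Rinv_0_lt_compat _ Hz)).
  rewrite ln_Rinv in H; lra.
Qed.

Lemma ln_mvt u v : 0 < u -> 0 < v -> exists m, ln u - ln v = m * (u - v) /\
  ((/ u <= m <= / v) \/ (/ v <= m <= / u)).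
Proof.
  intros Hu Hv.
  assert (Hd : ln u - ln v = ln (u / v)).
  { unfold Rdiv. rewrite ln_mult, ln_Rinv; try lra. apply Rinv_0_lt_compat; lra. }
  assert (Huv : 0 < u / v) by (apply Rdiv_lt_0_compat; lra).
  assert (H1 := ln_le_xm1 _ Huv). assert (H2 := ln_ge_1mx _ Huv).
  assert (E1 : u / v - 1 = (u - v) * / v) by (field; lra).
  assert (E2 : 1 - / (u / v) = (u - v) * / u) by (field; lra).
  rewrite E1 in H1. rewrite E2 in H2. rewrite <- Hd in H1, H2.
  destruct (Rtotal_order u v) as [Hlt|[Heq|Hgt]].
  - exists ((ln u - ln v) / (u - v)). split. field; lra.
    right. split.
    + apply (Rmult_le_reg_r (v - u)); [lra|]. unfold Rdiv.
      replace ((ln u - ln v) * / (u - v) * (v - u)) with (-(ln u - ln v)) by (field; lra).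
      replace (/ v * (v - u)) with (- ((u - v) * / v)) by ring. lra.
    + apply (Rmult_le_reg_r (v - u)); [lra|]. unfold Rdiv.
      replace ((ln u - ln v) * / (u - v) * (v - u)) with (-(ln u - ln v)) by (field; lra).
      replace (/ u * (v - u)) with (- ((u - v) * / u)) by ring. lra.
  - subst. exists (/ v). split. ring. left; lra.
  - exists ((ln u - ln v) / (u - v)). split. field; lra.
    left. split.
    + apply (Rmult_le_reg_r (u - v)); [lra|]. unfold Rdiv.
      replace ((ln u - ln v) * / (u - v) * (u - v)) with (ln u - ln v) by (field; lra).
      lra.
    + apply (Rmult_le_reg_r (u - v)); [lra|]. unfold Rdiv.
      replace ((ln u - ln v) * / (u - v) * (u - v)) with (ln u - ln v) by (field; lra).
      lra.
Qed.

Lemma ratio_bound p q m0 c : 0 < m0 -> m0 <= q -> Rabs (p - q) <= c -> Rabs (p / q - 1) <= c * / m0.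
Proof.
  intros H0 Hq Hc. replace (p / q - 1) with ((p - q) * / q) by (field; lra).
  apply absmul; auto. apply absinv; auto.
Qed.
Definition Sv x y := ln x - (x - y) / (2 * x) - (x - y) ^ 2 / (6 * x ^ 2).
Lemma Sv_eq x y : 0 < x -> Sv x y = ln x + (-2/3 + 5/6*(y/x) - 1/6*(y/x)^2).
Proof. intros. unfold Sv. field. lra. Qed.

Lemma ident xcp xcq ycp ycq xp xq yp yq m :
  0 < xcp -> 0 < xcq -> 0 < xp -> 0 < xq ->
  ln xcq - ln xcp - (ln xq - ln xp) = m * (xcq/xcp - xq/xp) ->
  let ap := xcp - xp in let aq := xcq - xq in let bp := ycp - yp in let bq := ycq - yq in
  let th := 5/6 - (ycq/xcq + yq/xq)/6 in
  let gq := (xq - yq)/(xcq*xq) in let gp := (xp - yp)/(xcp*xp) in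
  let sig := ycp/xcp - yp/xp in
  (Sv xcq ycq - Sv xq yq) - (Sv xcp ycp - Sv xp yp) =
  th / xcq * ((aq + bq) - (ap + bp))
  + ((m/xcp - 2*th/xcq) * (aq - ap)
     + (- (m * ap * (xq - xp) * / xcp * / xp))
     + th * (bp - ap) * (/ xcq - / xcp)
     + th * (aq - ap) * gq
     + th * ap * (gq - gp)
     + (- (1/6) * sig * (ycq/xcq - ycp/xcp + yq/xq - yp/xp))).
Proof.
  intros H1 H2 H3 H4 HL. intros.
  rewrite !Sv_eq by lra.
  assert (E : ln xcq = ln xcp + ln xq - ln xp + m * (xcq/xcp - xq/xp)) by lra.
  rewrite E. unfold ap, aq, bp, bq, th, gq, gp, sig. field. lra.
Qed.

Lemma abs6 a1 a2 a3 a4 a5 a6 : Rabs (a1 + a2 + a3 + a4 + a5 + a6) <=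
  Rabs a1 + Rabs a2 + Rabs a3 + Rabs a4 + Rabs a5 + Rabs a6.
Proof.
  repeat (eapply Rle_trans; [apply Rabs_triang|]; apply Rplus_le_compat_r). apply Rle_refl.
Qed.

Lemma sq4 a b c e : (a + b + c + e) * (a + b + c + e) <= 4 * (a^2 + c^2 + (b^2 + e^2)).
Proof.
  pose proof (pow2_ge_0 (a-b)). pose proof (pow2_ge_0 (a-c)). pose proof (pow2_ge_0 (a-e)).
  pose proof (pow2_ge_0 (b-c)). pose proof (pow2_ge_0 (b-e)). pose proof (pow2_ge_0 (c-e)).
  nra.
Qed.

Definition KEc (m0 U L : R) := 9 * L * (/m0)^2 + U * L * (/m0)^3.
Definition Kc (m0 U L : R) := 128 * L^2 * (/m0)^2 + 64 * U^2 * (KEc m0 U L)^2.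

Lemma young x y : x * y <= y * y / 32 + 8 * (x * x).
Proof. assert (0 <= (y/ (4*1) - 4*x*1)^2 / 2) by (apply Rmult_le_pos; [apply pow2_ge_0|lra]). nra. Qed.

Lemma core (m0 U L h xcp xcq ycp ycq xp xq yp yq rp rq : R) :
  0 < m0 -> 0 < L -> 0 < h ->
  L * h <= m0 / 8 ->
  L * / m0 * (1 + U * / m0) * h <= 1/32 ->
  m0 <= xcp <= U -> m0 <= xcq <= U -> m0 <= ycp <= U -> m0 <= ycq <= U ->
  m0 <= xp <= U -> m0 <= xq <= U -> m0 <= yp <= U -> m0 <= yq <= U ->
  Rabs (xcq - xcp) <= L*h -> Rabs (ycq - ycp) <= L*h ->
  Rabs (xq - xp) <= L*h -> Rabs (yq - yp) <= L*h ->
  Rabs (xcp - ycp) <= L*h -> Rabs (xcq - ycq) <= L*h ->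
  Rabs (xp - yp) <= L*h -> Rabs (xq - yq) <= L*h ->
  3/4*xp <= rp <= 5/4*xp -> 3/4*xq <= rq <= 5/4*xq ->
  ((rq + rp)/2 * (((Sv xcq ycq - Sv xq yq) - (Sv xcp ycp - Sv xp yp))/h)) *
     ((((xcq - xq) + (ycq - yq)) - ((xcp - xp) + (ycp - yp)))/h)
  >= 1/4 * (((((xcq - xq) + (ycq - yq)) - ((xcp - xp) + (ycp - yp)))/h) *
            ((((xcq - xq) + (ycq - yq)) - ((xcp - xp) + (ycp - yp)))/h))
   - Kc m0 U L * ((xcp - xp)^2 + (ycp - yp)^2 + ((xcq - xq)^2 + (ycq - yq)^2)).
Proof.
  intros Hm0 HL Hh Hs1 Hs2 Bxcp Bxcq Bycp Bycq Bxp Bxq Byp Byq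
    Dxc Dyc Dx Dy Txp Txq Tp Tq Rp Rq.
  unfold Kc, KEc.
  set (i0 := / m0) in *.
  assert (Hi0 : 0 < i0) by (apply Rinv_0_lt_compat; lra).
  assert (Hd : 0 < L * h) by (apply Rmult_lt_0_compat; auto).
  set (d := L * h) in *.
  assert (Hdi : d * i0 <= 1/8).
  { unfold i0. apply (Rmult_le_reg_r m0); auto. rewrite Rmult_assoc, Rinv_l; lra. }
  destruct (ln_mvt (xcq/xcp) (xq/xp)) as [m [Hm Hmb]].
  1,2: apply Rdiv_lt_0_compat; lra.
  assert (HL2 : ln xcq - ln xcp - (ln xq - ln xp) = m * (xcq/xcp - xq/xp)).
  { rewrite <- Hm. unfold Rdiv. rewrite !ln_mult, !ln_Rinv; try lra;
    apply Rinv_0_lt_compat; lra. }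
  pose proof (ident xcp xcq ycp ycq xp xq yp yq m ltac:(lra) ltac:(lra) ltac:(lra) ltac:(lra) HL2) as Hid.
  simpl in Hid.
  set (ap := xcp - xp) in *. set (aq := xcq - xq) in *.
  set (bp := ycp - yp) in *. set (bq := ycq - yq) in *.
  set (th := 5/6 - (ycq/xcq + yq/xq)/6) in *.
  set (gq := (xq - yq)/(xcq*xq)) in *. set (gp := (xp - yp)/(xcp*xp)) in *.
  set (sig := ycp/xcp - yp/xp) in *.
  assert (Ixcp := absinv xcp m0 Hm0 ltac:(lra)).
  assert (Ixcq := absinv xcq m0 Hm0 ltac:(lra)).
  assert (Ixp := absinv xp m0 Hm0 ltac:(lra)).
  assert (Ixq := absinv xq m0 Hm0 ltac:(lra)).
  fold i0 in Ixcp, Ixcq, Ixp, Ixq.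
  assert (R1 : Rabs (xcp / xcq - 1) <= d * i0).
  { apply ratio_bound; auto. lra. rewrite Rabs_minus_sym; auto. }
  assert (R2 : Rabs (xp / xq - 1) <= d * i0).
  { apply ratio_bound; auto. lra. rewrite Rabs_minus_sym; auto. }
  assert (E1 : / (xcq / xcp) = xcp / xcq) by (field; lra).
  assert (E2 : / (xq / xp) = xp / xq) by (field; lra).
  rewrite E1, E2 in Hmb.
  apply abs_elim in R1. apply abs_elim in R2.
  assert (Hm1 : Rabs (m - 1) <= d * i0) by (apply Rabs_le; lra).
  assert (Hmabs : Rabs m <= 2) by (apply Rabs_le; apply abs_elim in Hm1; lra).
  assert (S1 : Rabs (ycq / xcq - 1) <= d * i0) by (apply ratio_bound; [auto | lra | rewrite Rabs_minus_sym; auto]).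
  assert (S2 : Rabs (ycp / xcp - 1) <= d * i0) by (apply ratio_bound; [auto | lra | rewrite Rabs_minus_sym; auto]).
  assert (S3 : Rabs (yq / xq - 1) <= d * i0) by (apply ratio_bound; [auto | lra | rewrite Rabs_minus_sym; auto]).
  assert (SS4 : Rabs (yp / xp - 1) <= d * i0) by (apply ratio_bound; [auto | lra | rewrite Rabs_minus_sym; auto]).
  apply abs_elim in S1. apply abs_elim in S2. apply abs_elim in S3. apply abs_elim in SS4.
  assert (Hth : Rabs (th - 1/2) <= d * i0 / 3) by (apply Rabs_le; unfold th; lra).
  assert (Hthabs : Rabs th <= 1) by (apply Rabs_le; apply abs_elim in Hth; lra).
  assert (Hinvd : Rabs (/ xcq - / xcp) <= d * i0 * i0).
  { replace (/ xcq - / xcp) with ((xcp - xcq) * / xcp * / xcq) by (field; lra).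
    apply absmul; [apply absmul|]; auto. rewrite Rabs_minus_sym; auto. }
  assert (Hgq : Rabs gq <= d * i0 * i0).
  { unfold gq. replace ((xq - yq) / (xcq * xq)) with ((xq - yq) * / xcq * / xq) by (field; lra).
    apply absmul; [apply absmul|]; auto. }
  assert (Hgp : Rabs gp <= d * i0 * i0).
  { unfold gp. replace ((xp - yp) / (xcp * xp)) with ((xp - yp) * / xcp * / xp) by (field; lra).
    apply absmul; [apply absmul|]; auto. }
  assert (Hsig : Rabs sig <= U * (Rabs ap + Rabs bp) * i0 * i0).
  { unfold sig. replace (ycp / xcp - yp / xp) with ((bp * xp - ap * yp) * / xcp * / xp)
      by (unfold ap, bp; field; lra).
    apply absmul; [apply absmul|]; auto.
    eapply Rle_trans. apply Rabs_triang. rewrite Rabs_Ropp, !Rabs_mult.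
    rewrite (Rabs_pos_eq xp), (Rabs_pos_eq yp) by lra.
    assert (0 <= Rabs ap) by apply Rabs_pos. assert (0 <= Rabs bp) by apply Rabs_pos. nra. }
  set (Sg := Rabs ap + Rabs aq + Rabs bp + Rabs bq).
  assert (Pap := Rabs_pos ap). assert (Paq := Rabs_pos aq).
  assert (Pbp := Rabs_pos bp). assert (Pbq := Rabs_pos bq).
  assert (Daqap : Rabs (aq - ap) <= Rabs aq + Rabs ap).
  { unfold Rminus. eapply Rle_trans. apply Rabs_triang. rewrite Rabs_Ropp. lra. }
  assert (Dbpap : Rabs (bp - ap) <= Rabs bp + Rabs ap).
  { unfold Rminus. eapply Rle_trans. apply Rabs_triang. rewrite Rabs_Ropp. lra. }
  assert (T1 : Rabs ((m/xcp - 2*th/xcq) * (aq - ap)) <= (3 * (d * i0 * i0)) * (Rabs aq + Rabs ap)).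
  { apply absmul; auto.
    replace (m/xcp - 2*th/xcq) with ((m - 1) * / xcp + (/ xcp - / xcq) + (1 - 2*th) * / xcq)
      by (field; lra).
    assert (A1 : Rabs ((m - 1) * / xcp) <= d * i0 * i0) by (apply absmul; auto).
    assert (A2 : Rabs (/ xcp - / xcq) <= d * i0 * i0) by (rewrite Rabs_minus_sym; auto).
    assert (A3 : Rabs ((1 - 2*th) * / xcq) <= (2 * (d * i0 / 3)) * i0).
    { apply absmul; auto. apply abs_elim in Hth. apply Rabs_le. lra. }
    eapply Rle_trans. apply Rabs_triang. eapply Rle_trans. apply Rplus_le_compat_r. apply Rabs_triang.
    assert (0 < d * i0 * i0) by (apply Rmult_lt_0_compat; auto; apply Rmult_lt_0_compat; auto).
    lra. }
  assert (T2 : Rabs (- (m * ap * (xq - xp) * / xcp * / xp)) <= 2 * Rabs ap * d * i0 * i0).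
  { rewrite Rabs_Ropp. apply absmul; [apply absmul; [apply absmul; [apply absmul|]|]|];
    auto; apply Rle_refl. }
  assert (T3 : Rabs (th * (bp - ap) * (/ xcq - / xcp)) <= 1 * (Rabs bp + Rabs ap) * (d * i0 * i0)).
  { apply absmul; [apply absmul|]; auto. }
  assert (T4 : Rabs (th * (aq - ap) * gq) <= 1 * (Rabs aq + Rabs ap) * (d * i0 * i0)).
  { apply absmul; [apply absmul|]; auto. }
  assert (T5 : Rabs (th * ap * (gq - gp)) <= 1 * Rabs ap * (2 * (d * i0 * i0))).
  { apply absmul; [apply absmul|]; auto. apply Rle_refl.
    unfold Rminus. eapply Rle_trans. apply Rabs_triang. rewrite Rabs_Ropp. lra. }
  assert (T6 : Rabs (- (1/6) * sig * (ycq/xcq - ycp/xcp + yq/xq - yp/xp))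
               <= (1/6) * (U * (Rabs ap + Rabs bp) * i0 * i0) * (4 * (d * i0))).
  { apply absmul; [apply absmul|]; auto. rewrite Rabs_Ropp, Rabs_pos_eq; lra.
    apply Rabs_le. lra. }
  set (hE := (m/xcp - 2*th/xcq) * (aq - ap)
     + (- (m * ap * (xq - xp) * / xcp * / xp))
     + th * (bp - ap) * (/ xcq - / xcp)
     + th * (aq - ap) * gq
     + th * ap * (gq - gp)
     + (- (1/6) * sig * (ycq/xcq - ycp/xcp + yq/xq - yp/xp))) in *.
  assert (HE : Rabs hE <= (9 * i0^2 + U * i0^3) * d * Sg).
  { unfold hE.
    eapply Rle_trans. apply abs6.
    assert (P1 : 0 <= d * i0 * i0) by (apply Rmult_le_pos; [apply Rmult_le_pos|]; lra).
    assert (P2 : 0 <= U * i0 * i0 * i0 * d) by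
       (repeat apply Rmult_le_pos; lra).
    assert (0 <= d * i0 * i0 * Rabs ap) by (apply Rmult_le_pos; lra).
    assert (0 <= d * i0 * i0 * Rabs aq) by (apply Rmult_le_pos; lra).
    assert (0 <= d * i0 * i0 * Rabs bp) by (apply Rmult_le_pos; lra).
    assert (0 <= d * i0 * i0 * Rabs bq) by (apply Rmult_le_pos; lra).
    assert (0 <= U * i0 * i0 * i0 * d * Rabs ap) by (apply Rmult_le_pos; lra).
    assert (0 <= U * i0 * i0 * i0 * d * Rabs aq) by (apply Rmult_le_pos; lra).
    assert (0 <= U * i0 * i0 * i0 * d * Rabs bp) by (apply Rmult_le_pos; lra).
    assert (0 <= U * i0 * i0 * i0 * d * Rabs bq) by (apply Rmult_le_pos; lra).
    unfold Sg. simpl. lra. }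
  rewrite Hid.
  apply abs_elim in Dxc. apply abs_elim in Dyc. apply abs_elim in Dx. apply abs_elim in Dy.
  apply abs_elim in Txp. apply abs_elim in Txq. apply abs_elim in Tp. apply abs_elim in Tq.
  set (hu := (aq + bq) - (ap + bp)).
  assert (Hhu : Rabs hu <= 4 * d) by (apply Rabs_le; unfold hu, aq, ap, bq, bp; lra).
  set (u := hu / h).
  assert (Hu : Rabs u <= 4 * L).
  { unfold u, Rdiv. replace (4 * L) with (4 * d * / h) by (unfold d; field; lra).
    apply absmul; auto. rewrite Rabs_pos_eq. apply Rle_refl. left; apply Rinv_0_lt_compat; lra. }
  set (A := (rq + rp) / 2).
  set (E := hE / h).
  set (KE := 9 * i0^2 + U * i0^3).
  assert (HEE : Rabs E <= KE * L * Sg).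
  { unfold E, Rdiv. replace (KE * L * Sg) with ((KE * d * Sg) * / h) by (unfold d; field; lra).
    apply absmul; auto. rewrite Rabs_pos_eq. apply Rle_refl. left; apply Rinv_0_lt_compat; lra. }
  replace ((A * ((th / xcq * hu + hE) / h)) * u) with ((A*th/xcq)*(u*u) + A*E*u)
    by (unfold u, E; field; lra).
  assert (HA1 : 3/8*(xp+xq) <= A <= 5/4 * U) by (unfold A; lra).
  assert (Hth2 := abs_elim _ _ Hth).
  assert (Hdi0 : 0 <= d * i0 / 3) by (apply Rmult_le_pos; [apply Rmult_le_pos|]; lra).
  assert (Ath1 : A * (th - 1/2) >= - (A * (d * i0 / 3))).
  { assert (A * (-(d*i0/3)) <= A * (th - 1/2)) by (apply Rmult_le_compat_l; lra). lra. }
  assert (Ath2 : A * (d * i0 / 3) <= 5/4 * U * (d * i0 / 3)) by (apply Rmult_le_compat_r; lra).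
  assert (Haq := abs_elim _ _ (Rle_refl (Rabs aq))).
  set (W := 3/8 * Rabs aq + 3/16 * d + 5/12 * U * d * i0).
  assert (HW : 0 <= W).
  { unfold W. assert (0 <= U * d * i0) by (repeat apply Rmult_le_pos; lra). lra. }
  assert (Ath : A * th - 3/8 * xcq >= - W).
  { unfold W. assert (aq = xcq - xq) by reflexivity. lra. }
  assert (Hxcq := inv_bound xcq m0 Hm0 ltac:(lra)). fold i0 in Hxcq.
  assert (Z1 : A * th / xcq - 3/8 >= - (W * i0)).
  { replace (A * th / xcq - 3/8) with ((A * th - 3/8 * xcq) * / xcq) by (field; lra).
    assert (- W * / xcq <= (A * th - 3/8 * xcq) * / xcq) by (apply Rmult_le_compat_r; lra).
    assert (W * / xcq <= W * i0) by (apply Rmult_le_compat_l; lra). lra. }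
  assert (HWi : W * i0 <= i0 * Rabs aq + L * i0 * (1 + U * i0) * h).
  { unfold W, d. assert (0 <= i0 * Rabs aq) by (apply Rmult_le_pos; lra).
    assert (0 <= L * i0 * h) by (repeat apply Rmult_le_pos; lra).
    assert (0 <= U * L * i0 * i0 * h) by (repeat apply Rmult_le_pos; lra).
    lra. }
  assert (Huu : 0 <= u * u) by (pose proof (Rle_0_sqr u); unfold Rsqr in *; lra).
  assert (G1 : (A * th / xcq) * (u * u) >= (3/8 - i0 * Rabs aq - L * i0 * (1 + U * i0) * h) * (u * u)).
  { apply Rle_ge, Rmult_le_compat_r; lra. }
  assert (G2 : (L * i0 * (1 + U * i0) * h) * (u * u) <= 1/32 * (u * u)).
  { apply Rmult_le_compat_r; lra. }
  assert (Hau : Rabs u * Rabs u = u * u).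
  { rewrite <- Rabs_mult. apply Rabs_pos_eq. exact Huu. }
  assert (Pu := Rabs_pos u).
  assert (G3 : (i0 * Rabs aq) * (u * u) <= u * u / 32 + 8 * ((4 * L * i0 * Rabs aq) * (4 * L * i0 * Rabs aq))).
  { pose proof (young (4 * L * i0 * Rabs aq) (Rabs u)) as Y. rewrite Hau in Y.
    rewrite <- Hau.
    assert (0 <= i0 * Rabs aq) by (apply Rmult_le_pos; lra).
    assert (Rabs u * Rabs u <= 4 * L * Rabs u) by (apply Rmult_le_compat_r; lra).
    assert (i0 * Rabs aq * (Rabs u * Rabs u) <= i0 * Rabs aq * (4 * L * Rabs u))
      by (apply Rmult_le_compat_l; lra).
    lra. }
  assert (PSg : 0 <= Sg) by (unfold Sg; lra).
  assert (PKE : 0 <= KE) by (unfold KE; assert (0 <= U * i0^3) by (apply Rmult_le_pos; [lra|apply pow_le; lra]); assert (0 <= i0^2) by (apply pow_le; lra); lra).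
  assert (G4 : - (u * u / 32 + 8 * ((5/4 * U * (KE * L * Sg)) * (5/4 * U * (KE * L * Sg)))) <= A * E * u).
  { assert (Rabs (A * E * u) <= (5/4 * U * (KE * L * Sg)) * Rabs u).
    { apply absmul; [apply absmul|]; auto. rewrite Rabs_pos_eq; lra. lra. }
    assert (H5 := young (5/4 * U * (KE * L * Sg)) (Rabs u)). rewrite Hau in H5.
    apply abs_elim in H. lra. }
  assert (G5 : Sg * Sg <= 4 * (ap^2 + bp^2 + (aq^2 + bq^2))).
  { unfold Sg. rewrite <- !(pow2_abs ap), <- !(pow2_abs aq), <- !(pow2_abs bp), <- !(pow2_abs bq).
    apply sq4. }
  set (Q4 := ap^2 + bp^2 + (aq^2 + bq^2)) in *.
  assert (HQ4 : 0 <= Q4) by (unfold Q4; pose proof (pow2_ge_0 ap); pose proof (pow2_ge_0 aq);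
     pose proof (pow2_ge_0 bp); pose proof (pow2_ge_0 bq); lra).
  assert (F1 : (L*i0*Rabs aq)*(L*i0*Rabs aq) <= (L*i0)^2 * Q4).
  { replace ((L*i0*Rabs aq)*(L*i0*Rabs aq)) with ((L*i0)^2 * (Rabs aq)^2) by ring.
    apply Rmult_le_compat_l. apply pow2_ge_0. rewrite pow2_abs. unfold Q4.
    pose proof (pow2_ge_0 ap); pose proof (pow2_ge_0 bq); pose proof (pow2_ge_0 bp); lra. }
  assert (F2 : (U*KE*L*Sg)*(U*KE*L*Sg) <= (U*KE*L)^2 * (4 * Q4)).
  { replace ((U*KE*L*Sg)*(U*KE*L*Sg)) with ((U*KE*L)^2 * (Sg * Sg)) by ring.
    apply Rmult_le_compat_l. apply pow2_ge_0. lra. }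
  assert (F3 : 0 <= (U*KE*L)^2 * Q4) by (apply Rmult_le_pos; [apply pow2_ge_0|lra]).
  unfold KE in *.
  clear - G1 G2 G3 G4 F1 F2 F3 Huu.
  lra.
Qed.

Lemma sum1_le n f g : (forall i, (1 <= i <= n)%nat -> f i <= g i) -> sum1 n f <= sum1 n g.
Proof.
  induction n; intros H; simpl. lra.
  apply Rplus_le_compat. apply IHn; intros; apply H; lia. apply H; lia.
Qed.

Lemma sum1_ext n f g : (forall i, (1 <= i <= n)%nat -> f i = g i) -> sum1 n f = sum1 n g.
Proof.
  induction n; intros H; simpl. lra.
  rewrite IHn, H; auto; try lia. intros; apply H; lia.
Qed.

Lemma sum1_lin n a b f g : sum1 n (fun i => a * f i + b * g i) = a * sum1 n f + b * sum1 n g.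
Proof. induction n; simpl. ring. rewrite IHn. ring. Qed.

Lemma sum1_scal n a f : sum1 n (fun i => a * f i) = a * sum1 n f.
Proof. induction n; simpl. ring. rewrite IHn. ring. Qed.

Lemma sum1_nonneg n f : (forall i, 0 <= f i) -> 0 <= sum1 n f.
Proof. induction n; intros H; simpl. lra. specialize (IHn H). specialize (H (S n)). lra. Qed.

Lemma sum1_left n f : sum1 (S n) f = f 1%nat + sum1 n (fun i => f (S i)).
Proof.
  induction n. simpl. ring.
  change (sum1 (S (S n)) f) with (sum1 (S n) f + f (S (S n))).
  rewrite IHn. simpl. ring.
Qed.

Lemma term_le_sum n f i : (forall i, 0 <= f i) -> (1 <= i <= n)%nat -> f i <= sum1 n f.
Proof.
  induction n; intros H Hi. lia. simpl.
  destruct (Nat.eq_dec i (S n)) as [->|Hne].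
  - pose proof (sum1_nonneg n f H). lra.
  - pose proof (IHn H ltac:(lia)). pose proof (H (S n)). lra.
Qed.

Lemma clamp_in N i : (1 <= i <= N)%nat -> clamp N i = i.
Proof. unfold clamp; lia. Qed.
Lemma clamp_range N i : (1 <= N)%nat -> (1 <= clamp N i <= N)%nat.
Proof. unfold clamp; lia. Qed.

Definition shiftok (phi : nat -> nat) := forall N (G : nat -> R), (1 <= N)%nat ->
  (forall i, 0 <= G i) -> sum1 N (fun i => G (clamp N (phi i))) <= 2 * sum1 N G.

Lemma shift_fix phi : (forall N i, (1 <= i <= N)%nat -> clamp N (phi i) = i) -> shiftok phi.
Proof.
  intros Hp N G HN HG. rewrite (sum1_ext N _ G).
  pose proof (sum1_nonneg N G HG). lra.
  intros i Hi. rewrite Hp; auto.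
Qed.

Lemma shift_id : shiftok (fun i => i).
Proof. apply shift_fix. intros; apply clamp_in; auto. Qed.
Lemma shift_Sp : shiftok (fun i => S (pred i)).
Proof. apply shift_fix. intros. rewrite Nat.succ_pred_pos by lia. apply clamp_in; auto. Qed.

Lemma shift_S : shiftok S.
Proof.
  intros N G HN HG. destruct N as [|n]. lia. simpl.
  rewrite (sum1_ext n _ (fun i => G (S i))).
  2: { intros i Hi. rewrite clamp_in; auto; lia. }
  assert (E : clamp (S n) (S (S n)) = S n) by (unfold clamp; lia). rewrite E.
  pose proof (sum1_left n G). simpl in H.
  pose proof (HG 1%nat). pose proof (HG (S n)). pose proof (sum1_nonneg n G HG).
  lra.
Qed.

Lemma shift_pred : shiftok pred.
Proof.
  intros N G HN HG. destruct N as [|n]. lia.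
  rewrite sum1_left. simpl pred.
  rewrite (sum1_ext n _ G).
  2: { intros i Hi. rewrite clamp_in; auto; lia. }
  assert (E : clamp (S n) 0 = 1%nat) by (unfold clamp; lia). rewrite E.
  simpl. pose proof (HG 1%nat). pose proof (HG (S n)).
  pose proof (term_le_sum n G 1 HG).
  destruct n. simpl. lra.
  assert (G 1%nat <= sum1 (S n) G) by (apply H1; lia).
  lra.
Qed.

Definition sum3 N (f : grid) := sum1 N (fun i => sum1 N (fun j => sum1 N (fun k => f i j k))).

Lemma shift3 N (V : grid) p1 p2 p3 : (1 <= N)%nat -> shiftok p1 -> shiftok p2 -> shiftok p3 ->
  (forall i j k, 0 <= V i j k) ->
  sum3 N (fun i j k => ext N V (p1 i) (p2 j) (p3 k)) <= 8 * sum3 N V.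
Proof.
  intros HN H1 H2 H3 HV. unfold sum3, ext.
  eapply Rle_trans.
  { apply sum1_le. intros i _. apply sum1_le. intros j _.
    apply (H3 N (fun k => V (clamp N (p1 i)) (clamp N (p2 j)) k)); auto. }
  rewrite (sum1_ext N _ (fun i => 2 * sum1 N (fun j => sum1 N (fun k => V (clamp N (p1 i)) (clamp N (p2 j)) k)))).
  2: { intros. apply sum1_scal. }
  rewrite sum1_scal.
  eapply Rle_trans.
  { apply Rmult_le_compat_l. lra. apply sum1_le. intros i _.
    apply (H2 N (fun j => sum1 N (fun k => V (clamp N (p1 i)) j k))); auto.
    intros; apply sum1_nonneg; auto. }
  rewrite sum1_scal.
  eapply Rle_trans.
  { apply Rmult_le_compat_l. lra. apply Rmult_le_compat_l. lra.
    apply (H1 N (fun i => sum1 N (fun j => sum1 N (fun k => V i j k)))); auto.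
    intros; apply sum1_nonneg; intros; apply sum1_nonneg; auto. }
  lra.
Qed.

Lemma sum3_le N f g : (forall i j k, in_cells N i j k -> f i j k <= g i j k) -> sum3 N f <= sum3 N g.
Proof.
  intros H. unfold sum3. apply sum1_le; intros. apply sum1_le; intros. apply sum1_le; intros.
  apply H. unfold in_cells; auto.
Qed.

Lemma sum3_lin N a b f g : sum3 N (fun i j k => a * f i j k + b * g i j k) = a * sum3 N f + b * sum3 N g.
Proof.
  unfold sum3. rewrite <- sum1_lin. apply sum1_ext. intros. rewrite <- sum1_lin.
  apply sum1_ext. intros. rewrite <- sum1_lin. reflexivity.
Qed.

Definition Vg (rc1 r1 rc0 r0 : grid) : grid := fun i j k =>
  (rc1 i j k - r1 i j k)^2 + (rc0 i j k - r0 i j k)^2.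

Lemma grad_diff p q h C : 0 < h -> Rabs ((q - p) / h) <= C -> Rabs (q - p) <= C * h.
Proof.
  intros Hh H. replace (q - p) with (((q - p)/h) * h) by (field; lra).
  rewrite Rabs_mult, (Rabs_pos_eq h) by lra. apply Rmult_le_compat_r; lra.
Qed.

Lemma face (N : nat) (h dt eps Cs lam2 : R) (rc0 rc1 r0 r1 rhat : grid) (i1 j1 k1 i2 j2 k2 : nat) :
  (1 <= N)%nat -> 0 < eps -> 0 < Cs -> 0 < lam2 -> 0 < h -> 0 <= dt <= lam2 * h ->
  ((Cs+1)*(lam2+1)) * h <= (eps/4) / 8 ->
  ((Cs+1)*(lam2+1)) * / (eps/4) * (1 + (Cs+eps+1) * / (eps/4)) * h <= 1/32 ->
  (forall i j k, in_cells N i j k ->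
       eps <= rc0 i j k <= Cs /\ eps <= rc1 i j k <= Cs) ->
  maxnorm_le N (gsub rc1 rc0) (Cs * dt) ->
  (forall i j k, in_cells N i j k ->
       eps / 2 <= r1 i j k <= Cs + eps / 2 /\ 0 < r0 i j k) ->
  maxnorm_le N (gsub r1 r0) ((Cs + 1) * dt) ->
  (forall i j k, in_cells N i j k ->
       eps / 2 <= rhat i j k <= Cs + eps / 2 /\
       3 / 4 <= rhat i j k / r1 i j k <= 5 / 4) ->
  Rabs ((ext N rc1 i2 j2 k2 - ext N rc1 i1 j1 k1)/h) <= Cs ->
  Rabs ((ext N rc0 i2 j2 k2 - ext N rc0 i1 j1 k1)/h) <= Cs ->
  Rabs ((ext N r1 i2 j2 k2 - ext N r1 i1 j1 k1)/h) <= Cs + 1 ->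
  Rabs ((ext N r0 i2 j2 k2 - ext N r0 i1 j1 k1)/h) <= Cs + 1 ->
  let St := gsub (Sfun rc1 rc0) (Sfun r1 r0) in
  let W := gadd (gsub rc1 r1) (gsub rc0 r0) in
  ((ext N rhat i2 j2 k2 + ext N rhat i1 j1 k1)/2 * ((ext N St i2 j2 k2 - ext N St i1 j1 k1)/h))
     * ((ext N W i2 j2 k2 - ext N W i1 j1 k1)/h)
  >= 1/4 * (((ext N W i2 j2 k2 - ext N W i1 j1 k1)/h) * ((ext N W i2 j2 k2 - ext N W i1 j1 k1)/h))
     - Kc (eps/4) (Cs+eps+1) ((Cs+1)*(lam2+1)) *
        (ext N (Vg rc1 r1 rc0 r0) i1 j1 k1 + ext N (Vg rc1 r1 rc0 r0) i2 j2 k2).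
Proof.
  intros HN He HC Hl Hh Hdt Hs1 Hs2 Ha Hma Hb Hmb Hc G1 G2 G3 G4 St W.
  set (L := (Cs+1)*(lam2+1)) in *.
  assert (HL : 0 < L) by (unfold L; apply Rmult_lt_0_compat; lra).
  assert (HLC : Cs + 1 <= L) by (unfold L; nra).
  assert (HLdt : (Cs + 1) * dt <= L * h).
  { unfold L. assert ((Cs+1)*dt <= (Cs+1)*(lam2*h)) by (apply Rmult_le_compat_l; lra). nra. }
  apply grad_diff in G1; auto. apply grad_diff in G2; auto.
  apply grad_diff in G3; auto. apply grad_diff in G4; auto.
  unfold ext in *.
  set (P1 := clamp N i1) in *. set (P2 := clamp N j1) in *. set (P3 := clamp N k1) in *.
  set (Q1 := clamp N i2) in *. set (Q2 := clamp N j2) in *. set (Q3 := clamp N k2) in *.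
  assert (CP : in_cells N P1 P2 P3) by (unfold in_cells, P1, P2, P3; repeat split; apply clamp_range; auto).
  assert (CQ : in_cells N Q1 Q2 Q3) by (unfold in_cells, Q1, Q2, Q3; repeat split; apply clamp_range; auto).
  destruct (Ha _ _ _ CP) as [AP0 AP1]. destruct (Ha _ _ _ CQ) as [AQ0 AQ1].
  destruct (Hb _ _ _ CP) as [BP1 BP0]. destruct (Hb _ _ _ CQ) as [BQ1 BQ0].
  destruct (Hc _ _ _ CP) as [_ CP1]. destruct (Hc _ _ _ CQ) as [_ CQ1].
  pose proof (Hma _ _ _ CP) as MaP. pose proof (Hma _ _ _ CQ) as MaQ.
  pose proof (Hmb _ _ _ CP) as MbP. pose proof (Hmb _ _ _ CQ) as MbQ.
  unfold gsub in MaP, MaQ, MbP, MbQ.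
  assert (HCdt : Cs * dt <= L * h) by (assert (Cs*dt <= (Cs+1)*dt) by (apply Rmult_le_compat_r; lra); lra).
  apply abs_elim in MaP. apply abs_elim in MaQ. apply abs_elim in MbP. apply abs_elim in MbQ.
  assert (RP : 3/4 * r1 P1 P2 P3 <= rhat P1 P2 P3 <= 5/4 * r1 P1 P2 P3).
  { destruct CP1 as [X Y]. split.
    - apply (Rmult_le_compat_r (r1 P1 P2 P3)) in X; [|lra].
      replace (rhat P1 P2 P3 / r1 P1 P2 P3 * r1 P1 P2 P3) with (rhat P1 P2 P3) in X by (field; lra). lra.
    - apply (Rmult_le_compat_r (r1 P1 P2 P3)) in Y; [|lra].
      replace (rhat P1 P2 P3 / r1 P1 P2 P3 * r1 P1 P2 P3) with (rhat P1 P2 P3) in Y by (field; lra). lra. }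
  assert (RQ : 3/4 * r1 Q1 Q2 Q3 <= rhat Q1 Q2 Q3 <= 5/4 * r1 Q1 Q2 Q3).
  { destruct CQ1 as [X Y]. split.
    - apply (Rmult_le_compat_r (r1 Q1 Q2 Q3)) in X; [|lra].
      replace (rhat Q1 Q2 Q3 / r1 Q1 Q2 Q3 * r1 Q1 Q2 Q3) with (rhat Q1 Q2 Q3) in X by (field; lra). lra.
    - apply (Rmult_le_compat_r (r1 Q1 Q2 Q3)) in Y; [|lra].
      replace (rhat Q1 Q2 Q3 / r1 Q1 Q2 Q3 * r1 Q1 Q2 Q3) with (rhat Q1 Q2 Q3) in Y by (field; lra). lra. }
  pose proof (core (eps/4) (Cs+eps+1) L h
    (rc1 P1 P2 P3) (rc1 Q1 Q2 Q3) (rc0 P1 P2 P3) (rc0 Q1 Q2 Q3)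
    (r1 P1 P2 P3) (r1 Q1 Q2 Q3) (r0 P1 P2 P3) (r0 Q1 Q2 Q3)
    (rhat P1 P2 P3) (rhat Q1 Q2 Q3)) as K.
  unfold St, W, Vg, gsub, gadd, Sfun. fold (Sv (rc1 Q1 Q2 Q3) (rc0 Q1 Q2 Q3)).
  apply abs_elim in G1. apply abs_elim in G2. apply abs_elim in G3. apply abs_elim in G4.
  assert (Cs * h <= L * h) by (apply Rmult_le_compat_r; lra).
  assert ((Cs+1) * h <= L * h) by (apply Rmult_le_compat_r; lra).
  apply K; try lra; apply Rabs_le; lra.
Qed.

Definition Bc N h (rhat St W : grid) : grid := fun i j k =>
  (ax (gmul (gmul (Ax N rhat) (Defs.Dx N h St)) (Defs.Dx N h W)) i j k
   + ay (gmul (gmul (Ay N rhat) (Dy N h St)) (Dy N h W)) i j k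
   + az (gmul (gmul (Az N rhat) (Dz N h St)) (Dz N h W)) i j k) * 1.
Definition Gc N h (W : grid) : grid := fun i j k =>
  (ax (gmul (Defs.Dx N h W) (Defs.Dx N h W)) i j k
   + ay (gmul (Dy N h W) (Dy N h W)) i j k
   + az (gmul (Dz N h W) (Dz N h W)) i j k) * 1.
Definition stx N (V : grid) : grid := fun i j k =>
  ext N V i j k + ext N V (S i) j k + (ext N V (pred i) j k + ext N V (S (pred i)) j k).
Definition sty N (V : grid) : grid := fun i j k =>
  ext N V i j k + ext N V i (S j) k + (ext N V i (pred j) k + ext N V i (S (pred j)) k).
Definition stz N (V : grid) : grid := fun i j k =>
  ext N V i j k + ext N V i j (S k) + (ext N V i j (pred k) + ext N V i j (S (pred k))).

Lemma cell (N : nat) (h dt eps Cs lam2 : R) (rc0 rc1 r0 r1 rhat : grid) :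
  (1 <= N)%nat -> 0 < eps -> 0 < Cs -> 0 < lam2 -> 0 < h -> 0 <= dt <= lam2 * h ->
  ((Cs+1)*(lam2+1)) * h <= (eps/4) / 8 ->
  ((Cs+1)*(lam2+1)) * / (eps/4) * (1 + (Cs+eps+1) * / (eps/4)) * h <= 1/32 ->
  (forall i j k, in_cells N i j k ->
       eps <= rc0 i j k <= Cs /\ eps <= rc1 i j k <= Cs) ->
  gradinf_le N h rc0 Cs ->
  gradinf_le N h rc1 Cs ->
  maxnorm_le N (gsub rc1 rc0) (Cs * dt) ->
  (forall i j k, in_cells N i j k ->
       eps / 2 <= r1 i j k <= Cs + eps / 2 /\ 0 < r0 i j k) ->
  gradinf_le N h r0 (Cs + 1) ->
  gradinf_le N h r1 (Cs + 1) ->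
  maxnorm_le N (gsub r1 r0) ((Cs + 1) * dt) ->
  (forall i j k, in_cells N i j k ->
       eps / 2 <= rhat i j k <= Cs + eps / 2 /\
       3 / 4 <= rhat i j k / r1 i j k <= 5 / 4) ->
  forall i j k, in_cells N i j k ->
  let St := gsub (Sfun rc1 rc0) (Sfun r1 r0) in
  let W := gadd (gsub rc1 r1) (gsub rc0 r0) in
  let V := Vg rc1 r1 rc0 r0 in
  let K := Kc (eps/4) (Cs+eps+1) ((Cs+1)*(lam2+1)) in
  Bc N h rhat St W i j k >= 1/4 * Gc N h W i j k
     - K/2 * (stx N V i j k + sty N V i j k + stz N V i j k).
Proof.
  intros HN He HC Hl Hh Hdt Hs1 Hs2 Ha [Gc0x [Gc0y Gc0z]] [Gc1x [Gc1y Gc1z]] Hma Hb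
    [G0x [G0y G0z]] [G1x [G1y G1z]] Hmb Hc i j k Hijk St W V K.
  destruct Hijk as [Hi [Hj Hk]].
  assert (FX : forall i j k, (i <= N)%nat -> (1 <= j <= N)%nat -> (1 <= k <= N)%nat ->
     gmul (gmul (Ax N rhat) (Defs.Dx N h St)) (Defs.Dx N h W) i j k >=
     1/4 * gmul (Defs.Dx N h W) (Defs.Dx N h W) i j k - K * (ext N V i j k + ext N V (S i) j k)).
  { intros i' j' k' H1 H2 H3. unfold gmul, Ax, Defs.Dx.
    apply (face N h dt eps Cs lam2 rc0 rc1 r0 r1 rhat i' j' k' (S i') j' k'); auto.
    apply Gc1x; auto. apply Gc0x; auto. apply G1x; auto. apply G0x; auto. }
  assert (FY : forall i j k, (1 <= i <= N)%nat -> (j <= N)%nat -> (1 <= k <= N)%nat ->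
     gmul (gmul (Ay N rhat) (Dy N h St)) (Dy N h W) i j k >=
     1/4 * gmul (Dy N h W) (Dy N h W) i j k - K * (ext N V i j k + ext N V i (S j) k)).
  { intros i' j' k' H1 H2 H3. unfold gmul, Ay, Dy.
    apply (face N h dt eps Cs lam2 rc0 rc1 r0 r1 rhat i' j' k' i' (S j') k'); auto.
    apply Gc1y; auto. apply Gc0y; auto. apply G1y; auto. apply G0y; auto. }
  assert (FZ : forall i j k, (1 <= i <= N)%nat -> (1 <= j <= N)%nat -> (k <= N)%nat ->
     gmul (gmul (Az N rhat) (Dz N h St)) (Dz N h W) i j k >=
     1/4 * gmul (Dz N h W) (Dz N h W) i j k - K * (ext N V i j k + ext N V i j (S k))).
  { intros i' j' k' H1 H2 H3. unfold gmul, Az, Dz.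
    apply (face N h dt eps Cs lam2 rc0 rc1 r0 r1 rhat i' j' k' i' j' (S k')); auto.
    apply Gc1z; auto. apply Gc0z; auto. apply G1z; auto. apply G0z; auto. }
  pose proof (FX i j k ltac:(lia) Hj Hk) as X1.
  pose proof (FX (pred i) j k ltac:(lia) Hj Hk) as X2.
  pose proof (FY i j k Hi ltac:(lia) Hk) as Y1.
  pose proof (FY i (pred j) k Hi ltac:(lia) Hk) as Y2.
  pose proof (FZ i j k Hi Hj ltac:(lia)) as Z1.
  pose proof (FZ i j (pred k) Hi Hj ltac:(lia)) as Z2.
  unfold Bc, Gc, stx, sty, stz, ax, ay, az. lra.
Qed.

Lemma sum3_ext N f g : (forall i j k, f i j k = g i j k) -> sum3 N f = sum3 N g.
Proof.
  intros H. unfold sum3. apply sum1_ext; intros. apply sum1_ext; intros. apply sum1_ext; intros. auto.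
Qed.

Lemma sum3_add N f g : sum3 N (fun i j k => f i j k + g i j k) = sum3 N f + sum3 N g.
Proof.
  rewrite <- (Rmult_1_l (sum3 N f)), <- (Rmult_1_l (sum3 N g)), <- sum3_lin.
  apply sum3_ext. intros; ring.
Qed.

Lemma Kc_pos m0 U L : 0 < m0 -> 0 < L -> 0 < Kc m0 U L.
Proof.
  intros. unfold Kc. assert (0 < / m0) by (apply Rinv_0_lt_compat; lra).
  assert (0 < L^2) by (apply pow_lt; lra). assert (0 < (/m0)^2) by (apply pow_lt; lra).
  assert (0 < 128 * L^2 * (/m0)^2) by (apply Rmult_lt_0_compat; [apply Rmult_lt_0_compat|]; lra).
  assert (0 <= 64 * U^2 * (KEc m0 U L)^2) by (apply Rmult_le_pos; [apply Rmult_le_pos|]; try apply pow2_ge_0; lra).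
  lra.
Qed.

Theorem mainTheorem9 (a b : R) (hab : a < b)
  (gamma eps Cs lam1 lam2 : R)
  (Hg : 0 < gamma) (He : 0 < eps) (HC : 0 < Cs) (Hl1 : 0 < lam1) (Hl2 : 0 < lam2) :
  exists C1 M1 h0 : R, 0 < C1 /\ 0 < M1 /\ 0 < h0 /\
  forall (N : nat) (dt : R) (rc0 rc1 r0 r1 rhat : grid),
    (1 <= N)%nat ->
    hN a b N <= h0 ->
    lam1 * hN a b N <= dt <= lam2 * hN a b N ->
    (* (a) *)
    (forall i j k, in_cells N i j k ->
       eps <= rc0 i j k <= Cs /\ eps <= rc1 i j k <= Cs) ->
    gradinf_le N (hN a b N) rc0 Cs ->
    gradinf_le N (hN a b N) rc1 Cs ->
    maxnorm_le N (gsub rc1 rc0) (Cs * dt) ->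
    gradinf_le N (hN a b N) (gsub rc1 rc0) (Cs * dt) ->
    (* (b) *)
    (forall i j k, in_cells N i j k ->
       eps / 2 <= r1 i j k <= Cs + eps / 2 /\ 0 < r0 i j k) ->
    gradinf_le N (hN a b N) r0 (Cs + 1) ->
    gradinf_le N (hN a b N) r1 (Cs + 1) ->
    maxnorm_le N (gsub r1 r0) ((Cs + 1) * dt) ->
    (* (c) *)
    (forall i j k, in_cells N i j k ->
       eps / 2 <= rhat i j k <= Cs + eps / 2 /\
       3 / 4 <= rhat i j k / r1 i j k <= 5 / 4) ->
    gamma * bracketD N (hN a b N) rhat
              (gsub (Sfun rc1 rc0) (Sfun r1 r0))
              (gadd (gsub rc1 r1) (gsub rc0 r0))
    >= gamma / 4 * gradnorm2sq N (hN a b N) (gadd (gsub rc1 r1) (gsub rc0 r0))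
       - C1 * (norm2sq N (hN a b N) (gsub rc1 r1) + norm2sq N (hN a b N) (gsub rc0 r0))
       - M1 * (hN a b N) ^ 8.
Proof.
  set (L := (Cs+1)*(lam2+1)).
  set (m0 := eps/4). set (U := Cs+eps+1).
  set (K := Kc m0 U L).
  assert (HL : 0 < L) by (unfold L; apply Rmult_lt_0_compat; lra).
  assert (Hm0 : 0 < m0) by (unfold m0; lra).
  assert (HK : 0 < K) by (apply Kc_pos; auto).
  assert (Hi0 : 0 < / m0) by (apply Rinv_0_lt_compat; lra).
  set (KZ := L * / m0 * (1 + U * / m0)).
  assert (HKZ : 0 < KZ).
  { unfold KZ. apply Rmult_lt_0_compat. apply Rmult_lt_0_compat; lra.
    assert (0 <= U * / m0) by (apply Rmult_le_pos; unfold U; lra). lra. }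
  exists (48 * gamma * K), 1, (Rmin (m0 / 8 / L) (1/32 / KZ)).
  split. repeat apply Rmult_lt_0_compat; lra.
  split. lra.
  split. apply Rmin_pos; apply Rdiv_lt_0_compat; lra.
  intros N dt rc0 rc1 r0 r1 rhat HN Hh0 Hdt Ha Gc0 Gc1 Hma _ Hb G0 G1 Hmb Hc.
  set (h := hN a b N) in *.
  assert (Hh : 0 < h).
  { unfold h, hN. apply Rdiv_lt_0_compat. lra. apply lt_0_INR; lia. }
  assert (Hs1 : L * h <= m0 / 8).
  { assert (h <= m0 / 8 / L) by (eapply Rle_trans; [apply Hh0|apply Rmin_l]).
    apply (Rmult_le_compat_l L) in H; [|lra].
    replace (L * (m0 / 8 / L)) with (m0/8) in H by (field; lra). lra. }
  assert (Hs2 : KZ * h <= 1/32).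
  { assert (h <= 1/32 / KZ) by (eapply Rle_trans; [apply Hh0|apply Rmin_r]).
    apply (Rmult_le_compat_l KZ) in H; [|lra].
    replace (KZ * (1/32 / KZ)) with (1/32) in H by (field; lra). lra. }
  assert (Hdt' : 0 <= dt <= lam2 * h).
  { split; [|lra]. assert (0 <= lam1 * h) by (apply Rmult_le_pos; lra). lra. }
  pose proof (cell N h dt eps Cs lam2 rc0 rc1 r0 r1 rhat HN He HC Hl2 Hh Hdt' Hs1 Hs2
     Ha Gc0 Gc1 Hma Hb G0 G1 Hmb Hc) as HC1.
  simpl in HC1. fold L m0 U K in HC1.
  set (St := gsub (Sfun rc1 rc0) (Sfun r1 r0)) in *.
  set (W := gadd (gsub rc1 r1) (gsub rc0 r0)) in *.
  set (V := Vg rc1 r1 rc0 r0) in *.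
  assert (EB : bracketD N h rhat St W = h^3 * sum3 N (Bc N h rhat St W)) by reflexivity.
  assert (EG : gradnorm2sq N h W = h^3 * sum3 N (Gc N h W)) by reflexivity.
  assert (E1 : norm2sq N h (gsub rc1 r1) = h^3 * sum3 N (fun i j k => (rc1 i j k - r1 i j k)^2)).
  { unfold norm2sq, inner. f_equal. apply sum3_ext. intros. unfold gsub. ring. }
  assert (E0 : norm2sq N h (gsub rc0 r0) = h^3 * sum3 N (fun i j k => (rc0 i j k - r0 i j k)^2)).
  { unfold norm2sq, inner. f_equal. apply sum3_ext. intros. unfold gsub. ring. }
  assert (EV : sum3 N V = sum3 N (fun i j k => (rc1 i j k - r1 i j k)^2) + sum3 N (fun i j k => (rc0 i j k - r0 i j k)^2)).
  { unfold V, Vg. apply sum3_add. }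
  assert (HV : forall i j k, 0 <= V i j k).
  { intros. unfold V, Vg. pose proof (pow2_ge_0 (rc1 i j k - r1 i j k)).
    pose proof (pow2_ge_0 (rc0 i j k - r0 i j k)). lra. }
  assert (SUM : sum3 N (Bc N h rhat St W) >=
     1/4 * sum3 N (Gc N h W) + (- (K/2)) * sum3 N (fun i j k => stx N V i j k + sty N V i j k + stz N V i j k)).
  { rewrite <- sum3_lin. apply Rle_ge. apply sum3_le. intros i j k H. specialize (HC1 i j k H). lra. }
  assert (STS : sum3 N (fun i j k => stx N V i j k + sty N V i j k + stz N V i j k) <= 96 * sum3 N V).
  { unfold stx, sty, stz. rewrite !sum3_add.
    assert (sum3 N (ext N V) <= 8 * sum3 N V) by exact (shift3 N V (fun i => i) (fun i => i) (fun i => i) HN shift_id shift_id shift_id HV).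
    pose proof (shift3 N V S (fun i => i) (fun i => i) HN shift_S shift_id shift_id HV).
    pose proof (shift3 N V pred (fun i => i) (fun i => i) HN shift_pred shift_id shift_id HV).
    pose proof (shift3 N V (fun i => S (pred i)) (fun i => i) (fun i => i) HN shift_Sp shift_id shift_id HV).
    pose proof (shift3 N V (fun i => i) S (fun i => i) HN shift_id shift_S shift_id HV).
    pose proof (shift3 N V (fun i => i) pred (fun i => i) HN shift_id shift_pred shift_id HV).
    pose proof (shift3 N V (fun i => i) (fun i => S (pred i)) (fun i => i) HN shift_id shift_Sp shift_id HV).
    pose proof (shift3 N V (fun i => i) (fun i => i) S HN shift_id shift_id shift_S HV).
    pose proof (shift3 N V (fun i => i) (fun i => i) pred HN shift_id shift_id shift_pred HV).
    pose proof (shift3 N V (fun i => i) (fun i => i) (fun i => S (pred i)) HN shift_id shift_id shift_Sp HV).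
    simpl in *. lra. }
  rewrite EB, EG, E1, E0.
  assert (Hh3 : 0 < h^3) by (apply pow_lt; lra).
  assert (Hh8 : 0 <= h^8) by (apply pow_le; lra).
  assert (P1 : 0 <= sum3 N V) by (unfold sum3; repeat (apply sum1_nonneg; intros); auto).
  rewrite EV in STS, P1.
  set (X := sum3 N (Bc N h rhat St W)) in *.
  set (Y := sum3 N (Gc N h W)) in *.
  set (Z := sum3 N (fun i j k => (rc1 i j k - r1 i j k)^2) + sum3 N (fun i j k => (rc0 i j k - r0 i j k)^2)) in *.
  set (T := sum3 N (fun i j k => stx N V i j k + sty N V i j k + stz N V i j k)) in *.
  assert (X >= 1/4 * Y - 48 * K * Z) by nra.
  assert (gamma * X >= gamma * (1/4 * Y - 48 * K * Z)) by (apply Rle_ge, Rmult_le_compat_l; lra).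
  assert (h^3 * (gamma * X) >= h^3 * (gamma * (1/4 * Y - 48 * K * Z))) by (apply Rle_ge, Rmult_le_compat_l; lra).
  replace (h ^ 3 * sum3 N (fun i j k => (rc1 i j k - r1 i j k) ^ 2) +
       h ^ 3 * sum3 N (fun i j k => (rc0 i j k - r0 i j k) ^ 2)) with (h^3 * Z) by (unfold Z; ring).
  nra.
Qed.
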